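(* Let $\mathcal{V}$ be an inner product space, $\mathcal{L}$ a linear operator on $\mathcal{V}$, and $\mathcal{U}\subset\mathcal{V}$ the subspace spanned by an orthonormal system $\{\mathbf{v}_1,\dots,\mathbf{v}_K\}$. Suppose that $(1-\epsilon)\|\mathbf{v}_i\|^2\le\|\mathcal{L}\mathbf{v}_i\|^2\le(1+\epsilon)\|\mathbf{v}_i\|^2$ for all $1\le i\le K$, and $(1-\epsilon)\|\mathbf{v}_i\pm\mathbf{v}_j\|^2\le\|\mathcal{L}(\mathbf{v}_i\pm\mathbf{v}_j)\|^2\le(1+\epsilon)\|\mathbf{v}_i\pm\mathbf{v}_j\|^2$ for all $1\le i,j\le K$. Then $$(1-K\epsilon)\|\mathbf{w}\|^2\le\|\mathcal{L}\mathbf{w}\|^2\le(1+K\epsilon)\|\mathbf{w}\|^2\quad\text{for all }\mathbf{w}\in\mathcal{U}.$$ *)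

(* Defs.v *)
From mathcomp Require Import all_boot all_order all_algebra.
From mathcomp Require Import reals.
Set Implicit Arguments. Unset Strict Implicit. Unset Printing Implicit Defensive.
Import Order.TTheory GRing.Theory Num.Theory.
Local Open Scope ring_scope.

Definition is_inner_product (R : realType) (V : lmodType R) (ip : V -> V -> R) : Prop :=
  [/\ (forall u v, ip u v = ip v u),
      (forall (a : R) u v w, ip (a *: u + v) w = a * ip u w + ip v w),
      (forall v, 0 <= ip v v)
    & (forall v, ip v v = 0 -> v = 0)].

Definition norm2 (R : realType) (V : lmodType R) (ip : V -> V -> R) (v : V) : R :=
  ip v v.

Definition orthonormal_sys (R : realType) (V : lmodType R) (ip : V -> V -> R)
  (K : nat) (v : 'I_K -> V) : Prop :=
  forall i j, ip (v i) (v j) = (i == j)%:R.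

Definition in_span (R : realType) (V : lmodType R) (K : nat) (v : 'I_K -> V) (w : V) : Prop :=
  exists c : 'I_K -> R, w = \sum_(i < K) c i *: v i.

(* Main.v *)
Require Import Defs.
From mathcomp Require Import all_boot all_order all_algebra.
From mathcomp Require Import reals.
From mathcomp Require Import ring lra.
Import Order.TTheory GRing.Theory Num.Theory.
Local Open Scope ring_scope.

Section IP.
Variables (R : realType) (V : lmodType R) (ip : V -> V -> R).
Hypothesis Hip : is_inner_product ip.

Lemma ipS u v : ip u v = ip v u. Proof. by case: Hip. Qed.
Lemma ipZDl a u v w : ip (a*:u+v) w = a * ip u w + ip v w. Proof. by case: Hip. Qed.
Lemma ipDl u v w : ip (u+v) w = ip u w + ip v w.
Proof. by rewrite -{1}[u]scale1r ipZDl mul1r. Qed.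
Lemma ip0l w : ip 0 w = 0.
Proof. have := ipDl 0 0 w; rewrite addr0 => h; lra. Qed.
Lemma ipZl a u w : ip (a*:u) w = a * ip u w.
Proof. by rewrite -[a*:u]addr0 ipZDl ip0l addr0. Qed.
Lemma ipNl u w : ip (-u) w = - ip u w.
Proof. by rewrite -scaleN1r ipZl mulN1r. Qed.
Lemma ipZr a u w : ip w (a*:u) = a * ip w u.
Proof. by rewrite ipS ipZl ipS. Qed.
Lemma ipDr u v w : ip w (u+v) = ip w u + ip w v.
Proof. by rewrite ipS ipDl ipS (ipS v). Qed.
Lemma ipNr u w : ip w (-u) = - ip w u.
Proof. by rewrite ipS ipNl ipS. Qed.
Lemma ip0r w : ip w 0 = 0.
Proof. by rewrite ipS ip0l. Qed.

Lemma ip_suml (I : Type) (s : seq I) (F : I -> V) w :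
  ip (\sum_(i <- s) F i) w = \sum_(i <- s) ip (F i) w.
Proof.
elim: s => [|x s IH]; first by rewrite !big_nil ip0l.
by rewrite !big_cons ipDl IH.
Qed.
Lemma ip_sumr (I : Type) (s : seq I) (F : I -> V) w :
  ip w (\sum_(i <- s) F i) = \sum_(i <- s) ip w (F i).
Proof.
elim: s => [|x s IH]; first by rewrite !big_nil ip0r.
by rewrite !big_cons ipDr IH.
Qed.
Lemma ip_sum (K : nat) (c : 'I_K -> R) (u : 'I_K -> V) :
  ip (\sum_(i<K) c i *: u i) (\sum_(j<K) c j *: u j)
  = \sum_(i<K) \sum_(j<K) c i * c j * ip (u i) (u j).
Proof.
rewrite ip_suml; apply: eq_bigr => i _; rewrite ipZl ip_sumr mulr_sumr.
by apply: eq_bigr => j _; rewrite ipZr mulrA.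
Qed.
End IP.
Arguments ipS {R V ip}.
Arguments ipZDl {R V ip}.
Arguments ipDl {R V ip}.
Arguments ip0l {R V ip}.
Arguments ipZl {R V ip}.
Arguments ipNl {R V ip}.
Arguments ipZr {R V ip}.
Arguments ipDr {R V ip}.
Arguments ipNr {R V ip}.
Arguments ip0r {R V ip}.
Arguments ip_suml {R V ip}.
Arguments ip_sumr {R V ip}.
Arguments ip_sum {R V ip}.

Theorem lemma3 (R : realType) (V : lmodType R) (ip : V -> V -> R)
  (L : {linear V -> V}) (K : nat) (v : 'I_K -> V) (eps : R) :
  is_inner_product ip ->
  orthonormal_sys ip v ->
  (forall i : 'I_K,
     (1 - eps) * norm2 ip (v i) <= norm2 ip (L (v i)) <= (1 + eps) * norm2 ip (v i)) ->
  (forall i j : 'I_K,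
     (1 - eps) * norm2 ip (v i + v j) <= norm2 ip (L (v i + v j))
       <= (1 + eps) * norm2 ip (v i + v j)) ->
  (forall i j : 'I_K,
     (1 - eps) * norm2 ip (v i - v j) <= norm2 ip (L (v i - v j))
       <= (1 + eps) * norm2 ip (v i - v j)) ->
  forall w : V, in_span v w ->
    (1 - K%:R * eps) * norm2 ip w <= norm2 ip (L w) <= (1 + K%:R * eps) * norm2 ip w.
Proof.
move=> Hip Hon H1 H2 H3 w [c ->].
have Lw : L (\sum_i c i *: v i) = \sum_i c i *: L (v i).
  by rewrite linear_sum; apply: eq_bigr => i _; rewrite linearZ.
rewrite /norm2 Lw !ip_sum //.
set G := fun i j => ip (L (v i)) (L (v j)).
have HB : forall i j, -eps <= G i j - (i==j)%:R <= eps.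
  move=> i j; have := H2 i j; have := H3 i j.
  rewrite /norm2 !linearD !linearN /= /G.
  rewrite !(ipDl Hip) !(ipDr Hip) !(ipNl Hip) !(ipNr Hip) !Hon !eqxx.
  rewrite (ipS Hip (L (v j)) (L (v i))) (eq_sym j i).
  have := H1 i; have := H1 j; rewrite /norm2 !Hon !eqxx.
  move: (ip (L (v i)) (L (v i))) (ip (L (v j)) (L (v j))) (ip (L (v i)) (L (v j))) ((i == j)%:R : R).
  move=> a b x d; rewrite !mulr1 => /andP[h1 h2] /andP[h3 h4] /andP[h5 h6] /andP[h7 h8].
  rewrite ?mulr1n in h5 h6 h7 h8; apply/andP; split; lra.
have S0E : \sum_i \sum_j c i * c j * ip (v i) (v j) = \sum_i c i ^+ 2.
  apply: eq_bigr => i _; rewrite (bigD1 i) //= big1 ?Hon ?eqxx ?addr0 ?mulr1 ?expr2 //.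
  by move=> j /negbTE; rewrite Hon eq_sym => ->; rewrite mulr0.
have SQ : \sum_(i < K) \sum_(j < K) (c i ^+2 + c j ^+2)/2 = K%:R * \sum_i c i ^+ 2.
  transitivity (\sum_(i < K) \sum_(j < K) (c i^+2/2) + \sum_(i < K) \sum_(j < K) (c j^+2/2)).
    by rewrite -big_split; apply: eq_bigr => i _; rewrite -big_split; apply: eq_bigr => j _; rewrite mulrDl.
  rewrite [X in _ + X]exchange_big /=.
  rewrite (eq_bigr (fun i => K%:R * (c i ^+2/2))); last first.
    by move=> i _; rewrite sumr_const card_ord mulr_natl.
  rewrite -mulr_sumr -mulr_suml; lra.
have D : \sum_i \sum_j c i * c j * G i j
   = \sum_i \sum_j c i * c j * ip (v i) (v j) + \sum_i \sum_j c i * c j * (G i j - (i==j)%:R).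
  rewrite -big_split; apply: eq_bigr => i _; rewrite -big_split; apply: eq_bigr => j _.
  by rewrite Hon /= -mulrDr addrC subrK.
have Up : \sum_i \sum_j c i * c j * (G i j - (i==j)%:R) <= eps * \sum_(i < K) \sum_(j < K) (c i ^+2 + c j ^+2)/2.
  rewrite mulr_sumr; apply: ler_sum => i _; rewrite mulr_sumr; apply: ler_sum => j _.
  have := HB i j; move: (G i j - _) (c i) (c j) => b x y /andP[? ?].
  have P1 : 0 <= (eps - b) * ((x + y) ^+ 2) by apply: mulr_ge0; [lra | exact: sqr_ge0].
  have P2 : 0 <= (eps + b) * ((x - y) ^+ 2) by apply: mulr_ge0; [lra | exact: sqr_ge0].
  rewrite !expr2 in P1 P2 *; nra.
have Lo' : \sum_i \sum_j - (c i * c j * (G i j - (i==j)%:R)) <= eps * \sum_(i < K) \sum_(j < K) (c i ^+2 + c j ^+2)/2.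
  rewrite mulr_sumr; apply: ler_sum => i _; rewrite mulr_sumr; apply: ler_sum => j _.
  have := HB i j; move: (G i j - _) (c i) (c j) => b x y /andP[? ?].
  have P1 : 0 <= (eps - b) * ((x - y) ^+ 2) by apply: mulr_ge0; [lra | exact: sqr_ge0].
  have P2 : 0 <= (eps + b) * ((x + y) ^+ 2) by apply: mulr_ge0; [lra | exact: sqr_ge0].
  rewrite !expr2 in P1 P2 *; nra.
have Lo : - (eps * \sum_(i < K) \sum_(j < K) (c i ^+2 + c j ^+2)/2) <= \sum_i \sum_j c i * c j * (G i j - (i==j)%:R).
  rewrite lerNl; apply: le_trans Lo'; rewrite -sumrN; rewrite le_eqVlt; apply/orP; left; apply/eqP/eq_bigr => i _; by rewrite -sumrN.
rewrite D S0E; rewrite SQ in Up Lo; apply/andP; split; lra.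
Qed.
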